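(* Let $\mathbb{F}_q$ be a finite field of order $q$ and $m\ge2$. Then the optimal winning probabilities of the multiplication games over $\mathbb{F}_q$ satisfy $$\omega_m\le\frac{1+\sqrt{1+4q(q-1)\,\omega_{m-1}}}{2q}.$$
   Context: For $r\ge1$, the $r$-player ''Number on the Forehead'' multiplication game over $\mathbb{F}_q$: inputs $X_1,\dots,X_r$ are independent and uniform on $\mathbb{F}_q$; player $k$ sees all inputs except $X_k$ (denoted $X_{[r]\setminus\{k\}}$) and outputs $Y_k=f_k(X_{[r]\setminus\{k\}})$ for a function $f_k:\mathbb{F}_q^{r-1}\to\mathbb{F}_q$ (for $r=1$ this is a constant). The game is won iff $\prod_{k=1}^rX_k=\sum_{k=1}^rY_k$. Define $\omega_r(f_1,\dots,f_r)=\Pr[\prod_{k=1}^rX_k=\sum_{k=1}^rf_k(X_{[r]\setminus\{k\}})]$ and $\omega_r=\max_{f_1,\dots,f_r}\omega_r(f_1,\dots,f_r)$, the maximum over all functions $\mathbb{F}_q^{r-1}\to\mathbb{F}_q$. *)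

(* Defs.v *)
From mathcomp Require Import all_boot all_order all_algebra all_field.
Set Implicit Arguments. Unset Strict Implicit. Unset Printing Implicit Defensive.
Import Order.TTheory GRing.Theory Num.Theory.
Local Open Scope ring_scope.

(* A strategy profile assigns to each
   player k a function of the full input vector, required to be independent
   of the coordinate x_k (player k sees X_{[r]\{k}} only). *)

Definition input (F : finFieldType) (r : nat) := {ffun 'I_r -> F}.
Definition profile (F : finFieldType) (r : nat) :=
  {ffun 'I_r -> {ffun input F r -> F}}.

Definition valid_profile (F : finFieldType) (r : nat) (f : profile F r) : bool :=
  [forall k : 'I_r, forall x : input F r, forall y : input F r,
     [forall j : 'I_r, (j != k) ==> (x j == y j)] ==> (f k x == f k y)].

Definition wins (F : finFieldType) (r : nat) (f : profile F r) (x : input F r) : bool :=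
  (\prod_(k < r) x k) == \sum_(k < r) f k x.

Definition win_count (F : finFieldType) (r : nat) (f : profile F r) : nat :=
  #|[set x : input F r | wins f x]|.

Definition omega_f (R : realFieldType) (F : finFieldType) (r : nat) (f : profile F r) : R :=
  (win_count f)%:R / (#|F| ^ r)%:R.

Definition omega (R : realFieldType) (F : finFieldType) (r : nat) : R :=
  (\max_(f : profile F r | valid_profile f) win_count f)%:R / (#|F| ^ r)%:R.

(* Main.v *)
Require Import Defs.
From mathcomp Require Import all_boot all_order all_algebra all_field.
From mathcomp Require Import ring lra.
Import Order.TTheory GRing.Theory Num.Theory.
Set Implicit Arguments. Unset Strict Implicit. Unset Printing Implicit Defensive.
Local Open Scope ring_scope.

Definition ext (F : finFieldType) n (y : input F n) (c : F) : input F n.+1 :=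
  [ffun i => if unlift ord_max i is Some j then y j else c].

Lemma ext_max F n y c : @ext F n y c ord_max = c.
Proof. by rewrite ffunE unlift_none. Qed.
Lemma ext_lift F n y c j : @ext F n y c (lift ord_max j) = y j.
Proof. by rewrite ffunE liftK. Qed.

Lemma win_count_sum F n (f : profile F n.+1) :
  win_count f = (\sum_(y : input F n) \sum_(c : F) (wins f (ext y c) : nat))%N.
Proof.
rewrite /win_count -sum1_card big_mkcond /= pair_big /=.
rewrite (reindex (fun p : input F n * F => ext p.1 p.2)) /=.
  by apply: eq_bigr => p _; rewrite inE; case: wins.
exists (fun x => ([ffun j => x (lift ord_max j)], x ord_max)).
  move=> [y c] _ /=; congr pair; last by rewrite ext_max.
  by apply/ffunP => j; rewrite ffunE ext_lift.
move=> x _ /=; apply/ffunP => i; case: (unliftP ord_max i) => [j ->| ->].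
  by rewrite ext_lift ffunE.
by rewrite ext_max.
Qed.

Lemma validP F r (f : profile F r) k (x y : input F r) : valid_profile f ->
  (forall j, j != k -> x j = y j) -> f k x = f k y.
Proof.
move=> /forallP /(_ k) /forallP /(_ x) /forallP /(_ y) /implyP H Hxy.
apply/eqP/H; apply/forallP => j; apply/implyP => /Hxy ->; exact: eqxx.
Qed.

Lemma wins_ext F n (f : profile F n.+1) y c :
 wins f (ext y c) = ((\prod_(k<n) y k) * c ==
   \sum_(k<n) f (lift ord_max k) (ext y c) + f ord_max (ext y c)).
Proof.
have hw : forall k : 'I_n, widen_ord (leqnSn n) k = lift ord_max k.
  by move=> k; apply: val_inj; rewrite /= /bump leqNgt ltn_ord.
rewrite /wins big_ord_recr big_ord_recr /= ext_max.
under eq_bigr do rewrite hw ext_lift.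
by under [X in _ == X + _]eq_bigr do rewrite hw.
Qed.

Lemma pair_bound F n (f : profile F n.+1) (a b : F) : valid_profile f -> a != b ->
  (\sum_(y : input F n) (wins f (ext y a) && wins f (ext y b) : nat)
   <= \max_(g : profile F n | valid_profile g) win_count g)%N.
Proof.
move=> vf ab.
pose g : profile F n := [ffun k => [ffun y => (f (lift ord_max k) (ext y a)
   - f (lift ord_max k) (ext y b)) / (a - b)]].
have vg : valid_profile g.
  apply/forallP => k; apply/forallP => x; apply/forallP => y; apply/implyP => /forallP H.
  rewrite !ffunE; apply/eqP; congr (_ / _); congr (_ - _); apply: validP vf _ => j;
  (case: (unliftP ord_max j) => [j' -> | ->] hj; rewrite ?ext_lift ?ext_max //;
   rewrite (inj_eq (@lift_inj _ ord_max)) in hj; by move: (H j'); rewrite hj => /eqP).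
have fm y : f ord_max (ext y a) = f ord_max (ext y b) :> F.
  by apply: validP vf _ => j; case: (unliftP ord_max j) => [j' -> | ->]; rewrite ?eqxx // !ext_lift.
have wg : forall y, wins f (ext y a) -> wins f (ext y b) -> wins g y.
  move=> y; rewrite !wins_ext => /eqP ha /eqP hb.
  have gE k : g k y = (f (lift ord_max k) (ext y a) - f (lift ord_max k) (ext y b)) / (a - b).
    by rewrite /g ffunE ffunE.
  apply/eqP; symmetry.
  transitivity (\sum_(k < n) (f (lift ord_max k) (ext y a) - f (lift ord_max k) (ext y b)) / (a - b)).
    by apply: eq_bigr => k _; exact: gE.
  rewrite -mulr_suml sumrB.
  have -> : \sum_(i < n) f (lift ord_max i) (ext y a) - \sum_(i < n) f (lift ord_max i) (ext y b)
     = (\prod_(k < n) y k) * (a - b).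
    by rewrite mulrBr ha hb fm; ring.
  by rewrite mulfK // subr_eq0.
apply: leq_trans (leq_bigmax_cond _ vg).
rewrite /win_count -sum1_card [X in (_ <= X)%N]big_mkcond /=; apply: leq_sum => y _.
rewrite inE; case: (boolP (wins f (ext y a))) => //= wa.
case: (boolP (wins f (ext y b))) => //= wb.
by rewrite wg.
Qed.
Lemma sq_bound F n (f : profile F n.+1) : valid_profile f ->
 (\sum_(y : input F n) (\sum_(c : F) (wins f (ext y c) : nat)) * (\sum_(c : F) (wins f (ext y c) : nat))
   <= win_count f + #|F| * (#|F|.-1 * \max_(g : profile F n | valid_profile g) win_count g))%N.
Proof.
move=> vf.
have e : forall y : input F n, ((\sum_(c : F) (wins f (ext y c) : nat)) * (\sum_(c : F) (wins f (ext y c) : nat))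
   = \sum_(c : F) (wins f (ext y c) : nat) + \sum_(a : F) \sum_(b | b != a) (wins f (ext y a) && wins f (ext y b) : nat))%N.
  move=> y; rewrite -big_split big_distrl /=; apply: eq_bigr => a _.
  rewrite big_distrr /= (bigD1 a) //=; congr addn; first by case: wins.
  by apply: eq_bigr => b _; case: wins; case: wins.
rewrite (eq_bigr _ (fun y _ => e y)) big_split /= -win_count_sum leq_add2l.
rewrite exchange_big /=.
under eq_bigr do rewrite exchange_big /=.
apply: (@leq_trans (\sum_(a : F) \sum_(b | b != a) \max_(g : profile F n | valid_profile g) win_count g)).
  apply: leq_sum => a _.
  apply: leq_sum => b ba.
  by apply: pair_bound vf _; rewrite eq_sym.
rewrite (eq_bigr (fun a => #|F|.-1 * \max_(g : profile F n | valid_profile g) win_count g)%N).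
  by rewrite sum_nat_const.
by move=> a _; rewrite sum_nat_const cardC1.
Qed.

Lemma cauchy_schwarz (R : realFieldType) (I : finType) (G : I -> R) :
  (\sum_i G i) ^+ 2 <= #|I|%:R * \sum_i G i ^+ 2.
Proof.
set S := \sum_i G i; set T := \sum_i G i ^+ 2.
have h0 : 0 <= \sum_i \sum_j (G i - G j) ^+ 2.
  by apply: sumr_ge0 => i _; apply: sumr_ge0 => j _; exact: sqr_ge0.
have h1 : forall i, \sum_j (G i - G j) ^+ 2
   = G i ^+ 2 *+ #|I| + T - 2 * G i * S.
  move=> i; transitivity (\sum_j (G i ^+ 2 + G j ^+ 2 - 2 * G i * G j)).
    by apply: eq_bigr => j _; ring.
  by rewrite sumrB big_split /= sumr_const mulr_sumr.
have h2 : \sum_i \sum_j (G i - G j) ^+ 2 = T *+ #|I| + T *+ #|I| - 2 * S * S.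
  rewrite (eq_bigr _ (fun i _ => h1 i)) sumrB big_split /= sumr_const -sumrMnl.
  by rewrite -mulr_suml -mulr_sumr.
rewrite h2 in h0; rewrite -subr_ge0.
have -> : #|I|%:R * T - S ^+ 2 = (T *+ #|I| + T *+ #|I| - 2 * S * S) / 2.
  by rewrite -mulr_natl; field.
by apply: divr_ge0.
Qed.

Lemma final_ineq (R : rcfType) (q Q W S M : R) : 1 <= q -> 0 < Q -> 0 <= M ->
  W ^+ 2 <= Q * S -> S <= W + q * (q - 1) * M ->
  W / (Q * q) <= (1 + Num.sqrt (1 + 4 * q * (q - 1) * (M / Q))) / (2 * q).
Proof.
move=> q1 Q0 M0 hWS hS.
have q0 : 0 < q by lra.
set w := W / (Q * q); set o := M / Q.
have hW : W = w * (Q * q) by rewrite /w mulfVK // mulf_neq0 // gt_eqF.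
have hM : M = o * Q by rewrite /o mulfVK // gt_eqF.
have o0 : 0 <= o by rewrite /o divr_ge0 // ltW.
have key : q * w ^+ 2 - w <= (q - 1) * o.
  have h : W ^+ 2 <= Q * (W + q * (q - 1) * M).
    by apply: le_trans hWS _; rewrite ler_pM2l.
  rewrite hW hM in h.
  have : 0 <= (Q ^+ 2 * q) * ((q - 1) * o - (q * w ^+ 2 - w)).
    have -> : (Q ^+ 2 * q) * ((q - 1) * o - (q * w ^+ 2 - w))
       = Q * (w * (Q * q) + q * (q - 1) * (o * Q)) - (w * (Q * q)) ^+ 2 by ring.
    by rewrite subr_ge0.
  by rewrite pmulr_rge0 ?subr_ge0 // mulr_gt0 // exprn_gt0.
have q10 : 0 <= q - 1 by lra.
have s0 : 0 <= 1 + 4 * q * (q - 1) * o.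
  apply: addr_ge0 => //; apply: mulr_ge0 => //; apply: mulr_ge0 => //; apply: mulr_ge0 => //; lra.
have hsq : (2 * q * w - 1) ^+ 2 <= 1 + 4 * q * (q - 1) * o.
  have -> : (2 * q * w - 1) ^+ 2 = 1 + 4 * q * (q * w ^+ 2 - w) by ring.
  have -> : 4 * q * (q - 1) * o = 4 * q * ((q - 1) * o) by ring.
  by rewrite lerD2l ler_pM2l // mulr_gt0 //; lra.
have h2 : 2 * q * w - 1 <= Num.sqrt (1 + 4 * q * (q - 1) * o).
  by apply: le_trans (ler_norm _) _; rewrite -sqrtr_sqr ler_sqrt.
rewrite ler_pdivlMr ?mulr_gt0 //; lra.
Qed.

Theorem propositionB2 (R : rcfType) (F : finFieldType) (m : nat) :
  (2 <= m)%N ->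
  omega R F m <=
    (1 + Num.sqrt (1 + 4 * (#|F|)%:R * ((#|F|)%:R - 1) * omega R F m.-1))
    / (2 * (#|F|)%:R).
Proof.
case: m => [|n] //= hm.
have [f0 vf0 Hmax] : {f0 : profile F n.+1 | valid_profile f0 &
    \max_(g in @valid_profile F n.+1) win_count g = win_count f0}.
  apply: eq_bigmax_cond; apply/card_gt0P.
  exists [ffun k => [ffun x => 0 : F]]; rewrite unfold_in.
  apply/forallP => k; apply/forallP => x; apply/forallP => y; apply/implyP => _.
  by rewrite !ffunE.
have cF : (0 < #|F|)%N by apply/card_gt0P; exists 0.
rewrite /omega (_ : \max_(g | valid_profile g) win_count g = win_count f0); last exact: Hmax.
rewrite !natrX exprSr.
set M := \max_(g : profile F n | valid_profile g) win_count g.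
pose Nn (y : input F n) := (\sum_(c : F) (wins f0 (ext y c) : nat))%N.
apply: (@final_ineq R _ _ _ ((\sum_(y : input F n) Nn y * Nn y)%N)%:R).
- by rewrite ler1n.
- by rewrite exprn_gt0 // ltr0n.
- exact: ler0n.
- have := cauchy_schwarz (fun y : input F n => (Nn y)%:R : R).
  rewrite card_ffun card_ord natrX -!natr_sum win_count_sum.
  by under [X in _ <= _ * X]eq_bigr do rewrite expr2 -natrM; rewrite -natr_sum.
- have := sq_bound vf0; rewrite -(ler_nat R) natrD !natrM.
  have -> : (#|F|.-1)%:R = #|F|%:R - 1 :> R by rewrite -[in RHS](prednK cF) -natr1 addrK.
  by rewrite mulrA.
Qed.
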